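(* For all sufficiently large $R$ the following holds. Let $V\subset\mathcal D_R$ be a finite set of points and $G_V$ the graph on $V$ in which distinct points are adjacent iff their hyperbolic distance is at most $R$. Let $(i,j)$ be admissible, let $S$ be the set of points of $V$ lying in tiles below $T_{i,j}$ other than $T_{i,j}$ itself, and let $y=|V\cap T_{i,j}|$. Suppose $y\ge 3$ and $G_V[S]$ can be covered by $x$ vertex-disjoint cycles and isolated vertices. Then $G_V[S\cup(V\cap T_{i,j})]$ can be covered by $\max\{1,x-y+1\}$ vertex-disjoint cycles and isolated vertices. Furthermore, if $y>x$, then $G_V[S\cup(V\cap T_{i,j})]$ has a Hamilton cycle (i.e. can be covered by a single cycle) exactly $y-x$ of whose edges have both endpoints in $T_{i,j}$.
   Context: $\mathcal D_R$ is the hyperbolic disk (curvature $-1$) of radius $R$ around the origin, with polar coordinates $(r,\theta)$, $r\in[0,R)$, $\theta\in(0,2\pi]$. Tiling: $i_{\max}=\lceil 0.9R/(2\ln 2)\rceil$, $n_i=2^{4-i+\lfloor R/(2\ln 2)\rfloor}$ for integers $0\le i\le i_{\max}$; $(i,j)$ is admissible if $0\le i\le i_{\max}$, $0\le j<n_i$; $T_{i,j}=\{(r,\theta)\in\mathcal D_R:\ R-2(i+1)\ln 2\le r<R-2i\ln 2,\ 2\pi j/n_i<\theta\le 2\pi(j+1)/n_i\}$. A tile $T_{i',j'}$ is below $T_{i,j}$ if $i'\le i$ and $T_{i',j'}$ is contained in the sector $\{(r,\theta): 2\pi j/n_i<\theta\le 2\pi(j+1)/n_i\}$. A graph $H$ is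 covered by $k$ vertex-disjoint cycles and isolated vertices if its vertex set can be partitioned into $k$ parts, each of which is either a single vertex or the vertex set of a cycle (of length at least $3$) in $H$. *)

(* Defs.v *)
From Stdlib Require Import Reals ZArith List.
Import ListNotations.
Open Scope R_scope.

(* A point of the hyperbolic plane in polar coordinates (r, theta). *)
Definition pt : Type := (R * R)%type.

Definition leb (a b : R) : bool := if Rle_dec a b then true else false.
Definition ltb (a b : R) : bool := if Rlt_dec a b then true else false.

Definition floorZ (x : R) : Z := Int_part x.
Definition ceilZ (x : R) : Z := (- Int_part (- x))%Z.

Definition inDisk (Rad : R) (p : pt) : Prop :=
  0 <= fst p < Rad /\ 0 < snd p <= 2 * PI.

Definition arcosh (c : R) : R := ln (c + sqrt (c * c - 1)).
Definition hdist (p q : pt) : R :=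
  arcosh (cosh (fst p) * cosh (fst q)
          - sinh (fst p) * sinh (fst q) * cos (snd p - snd q)).

Definition adjG (Rad : R) (p q : pt) : Prop := p <> q /\ hdist p q <= Rad.

Definition imax (Rad : R) : Z := ceilZ (9 / 10 * Rad / (2 * ln 2)).
Definition ntiles (Rad : R) (i : nat) : R :=
  powerRZ 2 (4 - Z.of_nat i + floorZ (Rad / (2 * ln 2)))%Z.

Definition admissible (Rad : R) (i j : nat) : Prop :=
  (Z.of_nat i <= imax Rad)%Z /\ INR j < ntiles Rad i.

Definition inTileb (Rad : R) (i j : nat) (p : pt) : bool :=
  ((leb 0 (fst p) && ltb (fst p) Rad) && (ltb 0 (snd p) && leb (snd p) (2 * PI)))
  && (leb (Rad - 2 * (INR i + 1) * ln 2) (fst p) && ltb (fst p) (Rad - 2 * INR i * ln 2))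
  && (ltb (2 * PI * INR j / ntiles Rad i) (snd p)
      && leb (snd p) (2 * PI * (INR j + 1) / ntiles Rad i)).

Definition inSector (Rad : R) (i j : nat) (p : pt) : Prop :=
  2 * PI * INR j / ntiles Rad i < snd p <= 2 * PI * (INR j + 1) / ntiles Rad i.

Definition below (Rad : R) (i' j' i j : nat) : Prop :=
  (i' <= i)%nat /\ forall p, inTileb Rad i' j' p = true -> inSector Rad i j p.

Definition cyc_edges {T : Type} (c : list T) : list (T * T) :=
  match c with
  | [] => []
  | x :: rest => combine c (rest ++ [x])
  end.

Definition is_cycle {T : Type} (adj : T -> T -> Prop) (c : list T) : Prop :=
  (3 <= length c)%nat /\ NoDup c /\ Forall (fun e => adj (fst e) (snd e)) (cyc_edges c).

Definition covered_by {T : Type} (adj : T -> T -> Prop) (W : T -> Prop) (k : nat) : Prop :=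
  exists parts : list (list T),
    length parts = k /\
    NoDup (concat parts) /\
    (forall v, In v (concat parts) <-> W v) /\
    Forall (fun c => length c = 1%nat \/ is_cycle adj c) parts.

(* Main.v *)
Require Import Defs.
From Stdlib Require Import Reals ZArith List Lia Lra Ratan Permutation.
Import ListNotations.


Fixpoint chainp {T : Type} (E : T -> T -> Prop) (p : T) (l : list T) : Prop :=
  match l with [] => True | a :: l' => E p a /\ chainp E a l' end.

Fixpoint cntp {T : Type} (f : T -> bool) (p : T) (l : list T) : nat :=
  match l with [] => 0%nat | a :: l' => ((if andb (f p) (f a) then 1 else 0) + cntp f a l')%nat end.

Fixpoint build {T : Type} (Q : list (list T)) (Tl : list T) : list T :=
  match Q with
  | [] => Tl
  | P :: Q' => match Tl with [] => concat Q | t :: Tl' => t :: P ++ build Q' Tl' end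
  end.

Lemma last_cons_ {T : Type} (a d : T) l : last (a :: l) d = last l a.
Proof.
  revert a d; induction l as [|b l IH]; intros a d; [reflexivity|].
  change (last (a :: b :: l) d) with (last (b :: l) d). rewrite !IH. reflexivity.
Qed.

Lemma last_In_ {T : Type} (l : list T) d : l <> [] -> In (last l d) l.
Proof.
  destruct l as [|a l]; [congruence|]. intros _. rewrite last_cons_.
  revert a; induction l as [|b l IH]; intros a; [simpl; auto|].
  rewrite last_cons_. right. apply IH.
Qed.

Lemma chainp_app {T : Type} (E : T -> T -> Prop) p l1 l2 :
  chainp E p (l1 ++ l2) <-> chainp E p l1 /\ chainp E (last l1 p) l2.
Proof.
  revert p; induction l1 as [|a l1 IH]; intros p; [simpl; tauto|].
  rewrite last_cons_. simpl app. cbn [chainp]. rewrite IH. tauto.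
Qed.

Lemma chain_of_cyc {T : Type} (E : T -> T -> Prop) a l b :
  Forall (fun e => E (fst e) (snd e)) (combine (a :: l) (l ++ [b])) -> chainp E a l.
Proof.
  revert a; induction l as [|c l IH]; intros a H; simpl; [auto|].
  simpl in H. inversion H; subst. split; auto.
Qed.

Lemma cyc_of_chain {T : Type} (E : T -> T -> Prop) a l b :
  chainp E a (l ++ [b]) -> Forall (fun e => E (fst e) (snd e)) (combine (a :: l) (l ++ [b])).
Proof.
  revert a; induction l as [|c l IH]; intros a H; simpl in *.
  - constructor; [simpl; tauto|constructor].
  - destruct H as [H1 H2]. constructor; auto.
Qed.

Lemma cyc_distinct {T : Type} (a : T) l b :
  NoDup (a :: l) -> ~ In b l -> a <> b ->
  Forall (fun e => fst e <> snd e) (combine (a :: l) (l ++ [b])).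
Proof.
  revert a; induction l as [|c l IH]; intros a Hn Hb Hab; simpl.
  - constructor; auto.
  - constructor.
    + simpl. inversion Hn; subst. intro E; subst; apply H1; simpl; auto.
    + apply IH. inversion Hn; auto. intro; apply Hb; simpl; auto.
      intro; subst; apply Hb; simpl; auto.
Qed.

Lemma cnt_combine {T : Type} (f : T -> bool) a l b :
  length (filter (fun e => andb (f (fst e)) (f (snd e))) (combine (a :: l) (l ++ [b])))
  = cntp f a (l ++ [b]).
Proof.
  revert a; induction l as [|c l IH]; intros a; simpl.
  - destruct (andb (f a) (f b)); reflexivity.
  - rewrite <- IH. simpl. destruct (andb (f a) (f c)); reflexivity.
Qed.

Lemma cntp_app {T : Type} (f : T -> bool) p l1 l2 :
  cntp f p (l1 ++ l2) = (cntp f p l1 + cntp f (last l1 p) l2)%nat.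
Proof.
  revert p; induction l1 as [|a l1 IH]; intros p; [simpl; reflexivity|].
  rewrite last_cons_. simpl app. cbn [cntp]. rewrite IH. lia.
Qed.

Lemma cntp_false {T : Type} (f : T -> bool) p l :
  (forall v, In v l -> f v = false) -> cntp f p l = 0%nat.
Proof.
  revert p; induction l as [|a l IH]; intros p H; simpl; [reflexivity|].
  rewrite (H a) by (simpl; auto). rewrite Bool.andb_false_r. simpl.
  apply IH. intros; apply H; simpl; auto.
Qed.

Lemma build_perm {T : Type} (Q : list (list T)) Tl :
  Permutation (build Q Tl) (concat Q ++ Tl).
Proof.
  revert Tl; induction Q as [|P Q IH]; intros Tl; simpl; [apply Permutation_refl|].
  destruct Tl as [|t Tl].
  - rewrite app_nil_r. apply Permutation_refl.
  - eapply perm_trans; [apply perm_skip; apply Permutation_app_head; apply IH|].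
    rewrite app_assoc. apply Permutation_middle.
Qed.

Lemma build_head {T : Type} (Q : list (list T)) t Tl :
  exists rest, build Q (t :: Tl) = t :: rest.
Proof. destruct Q; simpl; eauto. Qed.

Lemma build_chain {T : Type} (E : T -> T -> Prop) (Wp Tp : T -> Prop)
  (HE1 : forall a b, Tp a -> Wp b -> E a b)
  (HE2 : forall a b, Tp a -> Wp b -> E b a)
  (HT : forall a, Tp a -> Wp a) :
  forall Q Tl p z, (length Q <= length Tl)%nat ->
    (forall t, In t Tl -> Tp t) -> Tp z ->
    (forall P, In P Q -> exists a l, P = a :: l /\ chainp E a l /\ forall v, In v P -> Wp v) ->
    Wp p -> chainp E p (build Q Tl ++ [z]).
Proof.
  induction Q as [|P Q IH]; intros Tl p z HL HTl Hz HQ Hp; simpl.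
  - clear HL. revert p Hp; induction Tl as [|t Tl IHT]; intros p Hp; simpl.
    + split; auto.
    + split; [apply HE2; auto; apply HTl; simpl; auto|].
      apply IHT; [intros; apply HTl; simpl; auto|]. apply HT, HTl; simpl; auto.
  - destruct Tl as [|t Tl]; [simpl in HL; lia|].
    simpl. rewrite <- app_assoc. split; [apply HE2; auto; apply HTl; simpl; auto|].
    destruct (HQ P (or_introl eq_refl)) as (a & l & -> & Hc & Hw).
    apply chainp_app. split.
    + simpl. split; auto. apply HE1; [apply HTl; simpl; auto| apply Hw; simpl; auto].
    + apply IH; auto. simpl in HL; lia. intros; apply HTl; simpl; auto.
      intros; apply HQ; simpl; auto.
      apply Hw. apply last_In_. congruence.
Qed.

Lemma build_cnt {T : Type} (f : T -> bool) :
  forall Q Tl p z, (length Q <= length Tl)%nat ->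
    (forall t, In t Tl -> f t = true) -> f z = true ->
    (forall P, In P Q -> P <> [] /\ forall v, In v P -> f v = false) ->
    cntp f p (build Q Tl ++ [z]) = ((if f p then 1 else 0) + (length Tl - length Q))%nat.
Proof.
  induction Q as [|P Q IH]; intros Tl p z HL HTl Hz HQ; simpl.
  - clear HL. revert p; induction Tl as [|t Tl IHT]; intros p; simpl.
    + rewrite Hz. destruct (f p); reflexivity.
    + rewrite IHT by (intros; apply HTl; simpl; auto).
      rewrite (HTl t) by (simpl; auto). destruct (f p); simpl; lia.
  - destruct Tl as [|t Tl]; [simpl in HL; lia|].
    simpl. rewrite <- app_assoc. rewrite cntp_app.
    destruct (HQ P (or_introl eq_refl)) as [HPn HPf].
    rewrite IH; auto; [| simpl in HL; lia | intros; apply HTl; simpl; auto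
                       | intros; apply HQ; simpl; auto].
    rewrite (HPf (last P t)) by (apply last_In_; auto).
    rewrite cntp_false by auto.
    rewrite (HTl t) by (simpl; auto). simpl in HL.
    destruct (f p); simpl; lia.
Qed.
Open Scope R_scope.

Lemma sin_sq_le (t : R) : sin t * sin t <= t * t.
Proof.
  assert (Hp : forall u, 0 < u -> sin u * sin u <= u * u).
  { intros u Hu. pose proof (SIN_bound u). pose proof PI2_1.
    destruct (Rlt_le_dec u 1).
    - pose proof (sin_ge_0 u ltac:(lra) ltac:(lra)). pose proof (sin_lt_x u Hu). nra.
    - nra. }
  destruct (Rtotal_order t 0) as [H|[H|H]].
  - pose proof (Hp (- t) ltac:(lra)). rewrite sin_neg in H0. nra.
  - subst. rewrite sin_0. lra.
  - auto.
Qed.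

Lemma exp_ln2 : exp (ln 2) = 2.
Proof. apply exp_ln. lra. Qed.

Lemma geo_core (Rad a i rp rq D w M : R) :
  a = ln 2 -> 1000 <= Rad -> 0 <= rp -> 0 <= rq ->
  rp < Rad - 2 * i * a -> rq < Rad -> Rabs (rp - rq) <= 9/10 * Rad + 4 * a ->
  Rabs D <= w -> M = exp ((3 - i) * a + Rad / 2) -> w * M <= 2 * PI ->
  arcosh (cosh rp * cosh rq - sinh rp * sinh rq * cos D) <= Rad.
Proof.
  intros Ha HR Hp Hq Hp2 Hq2 Hd HD HM HwM.
  set (X := exp rp). set (Y := exp rq).
  set (s := sin (D / 2)).
  assert (HX : 1 <= X) by (pose proof (exp_ineq1_le rp); unfold X; lra).
  assert (HY : 1 <= Y) by (pose proof (exp_ineq1_le rq); unfold Y; lra).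
  assert (HcD : cos D = 1 - 2 * s * s).
  { unfold s. rewrite <- cos_2a_sin. f_equal. field. }
  set (K := cosh rp * cosh rq - sinh rp * sinh rq * cos D).
  assert (HK : K = (X / Y + Y / X) / 2 + s * s * ((X - / X) * (Y - / Y)) / 2).
  { unfold K, cosh, sinh. rewrite HcD, !exp_Ropp. fold X Y. field. lra. }
  assert (HXi : 0 < / X <= 1).
  { split. apply Rinv_0_lt_compat; lra. rewrite <- Rinv_1. apply Rinv_le_contravar; lra. }
  assert (HYi : 0 < / Y <= 1).
  { split. apply Rinv_0_lt_compat; lra. rewrite <- Rinv_1. apply Rinv_le_contravar; lra. }
  assert (Hprod0 : 0 <= (X - / X) * (Y - / Y)) by nra.
  assert (Hprod1 : (X - / X) * (Y - / Y) <= X * Y) by nra.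
  assert (Hss : 0 <= s * s) by nra.
  assert (Hs : s * s <= (D / 2) * (D / 2)) by apply sin_sq_le.
  set (P := exp (9/10 * Rad)).
  assert (H16 : exp (9/10 * Rad + 4 * a) = 16 * P).
  { unfold P. replace (9/10 * Rad + 4 * a) with (9/10*Rad + (a + a + a + a)) by ring.
    rewrite !exp_plus, Ha, exp_ln2. ring. }
  assert (HXY1 : X / Y <= 16 * P).
  { unfold X, Y. unfold Rdiv. rewrite <- exp_Ropp, <- exp_plus. rewrite <- H16.
    destruct (Rle_lt_or_eq_dec _ _ (Rle_trans _ _ _ (Rle_abs (rp + - rq))
      (ltac:(unfold Rminus in Hd; exact Hd)))) as [H|H].
    apply Rlt_le, exp_increasing; exact H. rewrite H; lra. }
  assert (HXY2 : Y / X <= 16 * P).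
  { unfold X, Y. unfold Rdiv. rewrite <- exp_Ropp, <- exp_plus. rewrite <- H16.
    rewrite Rabs_minus_sym in Hd.
    destruct (Rle_lt_or_eq_dec _ _ (Rle_trans _ _ _ (Rle_abs (rq + - rp))
      (ltac:(unfold Rminus in Hd; exact Hd)))) as [H|H].
    apply Rlt_le, exp_increasing; exact H. rewrite H; lra. }
  assert (HXYge : 2 <= X / Y + Y / X).
  { assert (X / Y * (Y / X) = 1) by (field; lra).
    assert (0 < X / Y) by (apply Rdiv_lt_0_compat; lra).
    assert (0 < Y / X) by (apply Rdiv_lt_0_compat; lra).
    set (u := X / Y) in *. set (v := Y / X) in *.
    assert (0 <= (u - v) * (u - v)) by (pose proof (Rle_0_sqr (u-v)); unfold Rsqr in *; lra).
    assert (4 <= (u + v) * (u + v)).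
    { replace ((u+v)*(u+v)) with ((u-v)*(u-v) + 4*(u*v)) by ring. lra. }
    nra. }
  set (G := exp (Rad - 2 * i * a)). set (ER := exp Rad).
  assert (HXY : X * Y <= ER * G).
  { unfold X, Y, ER, G. rewrite <- !exp_plus. apply Rlt_le, exp_increasing. lra. }
  assert (HM2 : M * M = 64 * G).
  { rewrite HM. unfold G. rewrite <- exp_plus.
    replace ((3 - i) * a + Rad / 2 + ((3 - i) * a + Rad / 2))
      with ((Rad - 2 * i * a) + (a + a + a + a + a + a)) by field.
    rewrite !exp_plus, Ha, exp_ln2. ring. }
  assert (HG : 0 < G) by apply exp_pos.
  assert (HMp : 0 < M) by (rewrite HM; apply exp_pos).
  assert (Hw0 : 0 <= w) by (pose proof (Rabs_pos D); lra).
  assert (HDD : D * D <= w * w).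
  { assert (D * D = Rabs D * Rabs D).
    { rewrite <- Rabs_mult. rewrite Rabs_right. reflexivity.
      pose proof (Rle_0_sqr D); unfold Rsqr in *; lra. }
    rewrite H. apply Rmult_le_compat; try apply Rabs_pos; auto. }
  assert (HPI : PI <= 4) by apply PI_4.
  assert (HPI0 : 0 < PI) by apply PI_RGT_0.
  assert (Hw2 : w * w * (64 * G) <= 64).
  { rewrite <- HM2. assert (0 <= w * M) by nra. nra. }
  assert (HER : 0 < ER) by apply exp_pos.
  assert (Hsec : s * s * ((X - / X) * (Y - / Y)) / 2 <= ER / 8).
  { assert (s * s * ((X - / X) * (Y - / Y)) <= (D/2)*(D/2) * (X * Y)).
    { apply Rmult_le_compat; auto. }
    assert ((D/2)*(D/2) * (X * Y) <= (w * w / 4) * (ER * G)).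
    { apply Rmult_le_compat; try nra. }
    assert (w * w * G <= 1) by lra. nra. }
  assert (HERP : ER = P * exp (1/10 * Rad)).
  { unfold ER, P. rewrite <- exp_plus. f_equal. field. }
  assert (He01 : 101 <= exp (1/10 * Rad)) by (pose proof (exp_ineq1_le (1/10*Rad)); lra).
  assert (HP0 : 0 < P) by apply exp_pos.
  assert (HK1 : 1 <= K) by (rewrite HK; nra).
  assert (HK2 : 2 * K <= ER) by (rewrite HK; nra).
  unfold arcosh. fold K.
  assert (Hsq : sqrt (K * K - 1) <= K).
  { apply Rle_trans with (sqrt (K * K)); [apply sqrt_le_1_alt; lra|].
    rewrite sqrt_square by lra. lra. }
  assert (Hsq0 := sqrt_pos (K * K - 1)).
  assert (Harg : 0 < K + sqrt (K * K - 1) <= ER) by lra.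
  destruct Harg as [Harg1 Harg2].
  destruct (Rle_lt_or_eq_dec _ _ Harg2) as [H|H].
  - left. rewrite <- (ln_exp Rad). apply ln_increasing; auto.
  - right. rewrite H. unfold ER. apply ln_exp.
Qed.

Lemma leb_true a b : Defs.leb a b = true -> a <= b.
Proof. unfold Defs.leb; destruct (Rle_dec a b); congruence. Qed.
Lemma ltb_true a b : Defs.ltb a b = true -> a < b.
Proof. unfold Defs.ltb; destruct (Rlt_dec a b); congruence. Qed.

Lemma tile_spec Rad i j p : inTileb Rad i j p = true ->
  0 <= fst p /\ fst p < Rad /\ Rad - 2 * (INR i + 1) * ln 2 <= fst p /\
  fst p < Rad - 2 * INR i * ln 2 /\ inSector Rad i j p.
Proof.
  unfold inTileb, inSector. intro H.
  repeat match goal with H : andb _ _ = true |- _ => apply Bool.andb_true_iff in H; destruct H end.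
  repeat match goal with
         | H : Defs.leb _ _ = true |- _ => apply leb_true in H
         | H : Defs.ltb _ _ = true |- _ => apply ltb_true in H end.
  repeat split; assumption.
Qed.

Lemma ln2_bounds : 0 < ln 2 < 1.
Proof.
  pose proof ln_lt_2. split; [lra|].
  rewrite <- (ln_exp 1). apply ln_increasing; [lra|].
  pose proof (exp_ineq1 1 ltac:(lra)). lra.
Qed.

Lemma ntiles_pos Rad i : 0 < ntiles Rad i.
Proof. unfold ntiles. apply powerRZ_lt. lra. Qed.

Lemma ntiles_ge Rad i : exp ((3 - INR i) * ln 2 + Rad / 2) <= ntiles Rad i.
Proof.
  pose proof ln2_bounds.
  unfold ntiles. rewrite powerRZ_Rpower by lra. unfold Rpower.
  rewrite !plus_IZR, minus_IZR, <- INR_IZR_INZ.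
  unfold floorZ. pose proof (base_Int_part (Rad / (2 * ln 2))) as [_ HF].
  set (F := IZR (Int_part (Rad / (2 * ln 2)))) in *.
  assert (HF2 : F * ln 2 > Rad / 2 - ln 2).
  { assert ((Rad / (2 * ln 2)) * ln 2 = Rad / 2) by (field; lra).
    assert (F * ln 2 > (Rad / (2 * ln 2) - 1) * ln 2) by (apply Rmult_gt_compat_r; lra).
    lra. }
  apply Rlt_le, exp_increasing. lra.
Qed.

Lemma imax_bound Rad i j : admissible Rad i j -> INR i < 9/10 * Rad / (2 * ln 2) + 1.
Proof.
  intros [H _]. unfold imax, ceilZ in H. apply IZR_le in H.
  rewrite <- INR_IZR_INZ, opp_IZR in H.
  pose proof (base_Int_part (- (9 / 10 * Rad / (2 * ln 2)))) as [_ HF]. lra.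
Qed.

Lemma geo_pts Rad i j p q : 1000 <= Rad -> admissible Rad i j ->
  inTileb Rad i j p = true ->
  0 <= fst q -> fst q < Rad -> Rad - 2 * (INR i + 1) * ln 2 <= fst q -> inSector Rad i j q ->
  hdist p q <= Rad /\ hdist q p <= Rad.
Proof.
  intros HR Hadm Hp Hq0 Hq1 Hq2 Hq3.
  destruct (tile_spec _ _ _ _ Hp) as (Hp0 & Hp1 & Hp2 & Hp3 & Hp4).
  pose proof ln2_bounds as Hl. pose proof (imax_bound _ _ _ Hadm) as Hi.
  pose proof (ntiles_pos Rad i) as Hn. pose proof (ntiles_ge Rad i) as Hn2.
  set (n := ntiles Rad i) in *.
  unfold inSector in Hp4, Hq3. fold n in Hp4, Hq3.
  assert (Hw : 2 * PI * (INR j + 1) / n - 2 * PI * INR j / n = 2 * PI / n) by (field; lra).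
  assert (HD : Rabs (snd p - snd q) <= 2 * PI / n) by (apply Rabs_le; split; lra).
  assert (Hw0 : 0 <= 2 * PI / n) by (pose proof PI_RGT_0; apply Rlt_le, Rdiv_lt_0_compat; lra).
  assert (HwM : 2 * PI / n * exp ((3 - INR i) * ln 2 + Rad / 2) <= 2 * PI).
  { apply Rle_trans with (2 * PI / n * n). apply Rmult_le_compat_l; lra.
    right; field; lra. }
  assert (Hb : 2 * (INR i + 1) * ln 2 <= 9/10 * Rad + 4 * ln 2).
  { assert (9 / 10 * Rad / (2 * ln 2) * (2 * ln 2) = 9/10 * Rad) by (field; lra).
    assert (INR i * (2 * ln 2) < (9 / 10 * Rad / (2 * ln 2) + 1) * (2 * ln 2))
      by (apply Rmult_lt_compat_r; lra).
    lra. }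
  assert (Hd : Rabs (fst p - fst q) <= 9/10 * Rad + 4 * ln 2) by (apply Rabs_le; split; lra).
  split.
  - unfold hdist. eapply geo_core; eauto.
  - unfold hdist.
    replace (cos (snd q - snd p)) with (cos (snd p - snd q))
      by (rewrite <- cos_neg; f_equal; ring).
    replace (cosh (fst q) * cosh (fst p) - sinh (fst q) * sinh (fst p) * cos (snd p - snd q))
      with (cosh (fst p) * cosh (fst q) - sinh (fst p) * sinh (fst q) * cos (snd p - snd q))
      by ring.
    eapply geo_core; eauto.
Qed.

Lemma tile_disj Rad i j i' j' p : (i' <= i)%nat -> (i', j') <> (i, j) ->
  inTileb Rad i' j' p = true -> inTileb Rad i j p = true -> False.
Proof.
  intros Hle Hne H1 H2.
  destruct (tile_spec _ _ _ _ H1) as (_ & _ & A1 & A2 & A3).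
  destruct (tile_spec _ _ _ _ H2) as (_ & _ & B1 & B2 & B3).
  pose proof ln2_bounds.
  destruct (Nat.eq_dec i' i) as [->|Hii].
  - unfold inSector in A3, B3. pose proof (ntiles_pos Rad i) as Hn.
    set (n := ntiles Rad i) in *. set (c := 2 * PI / n).
    assert (Hc : 0 < c) by (unfold c; pose proof PI_RGT_0; apply Rdiv_lt_0_compat; lra).
    assert (E : forall k, 2 * PI * k / n = c * k) by (intros; unfold c; field; lra).
    rewrite !E in A3, B3.
    assert (INR j' < INR j + 1) by (apply (Rmult_lt_reg_l c); lra).
    assert (INR j < INR j' + 1) by (apply (Rmult_lt_reg_l c); lra).
    rewrite <- S_INR in *. apply INR_lt in H0. apply INR_lt in H3.
    apply Hne. f_equal. lia.
  - assert (S i' <= i)%nat by lia. apply le_INR in H0. rewrite S_INR in H0.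
    nra.
Qed.

Lemma chainp_mono {T : Type} (E1 E2 : T -> T -> Prop) p l :
  (forall a b, E1 a b -> E2 a b) -> chainp E1 p l -> chainp E2 p l.
Proof. revert p; induction l; simpl; intuition. Qed.

Theorem mainTheorem8 :
  exists R0 : R, forall Rad : R, R0 <= Rad ->
  forall (V : list pt),
    NoDup V ->
    (forall p, In p V -> inDisk Rad p) ->
    (forall p q, In p V -> In q V -> fst p = 0 -> fst q = 0 -> p = q) ->
  forall (i j : nat), admissible Rad i j ->
  let inS := fun p => In p V /\
      exists i' j', admissible Rad i' j' /\ (i', j') <> (i, j) /\
                    below Rad i' j' i j /\ inTileb Rad i' j' p = true in
  let inT := fun p => In p V /\ inTileb Rad i j p = true in
  let y := length (filter (inTileb Rad i j) V) in
  forall x : nat,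
    (3 <= y)%nat ->
    covered_by (adjG Rad) inS x ->
    covered_by (adjG Rad) (fun p => inS p \/ inT p) (Nat.max 1 (x + 1 - y)) /\
    ((y > x)%nat ->
     exists c : list pt,
       is_cycle (adjG Rad) c /\
       (forall p, In p c <-> (inS p \/ inT p)) /\
       length (filter (fun e => andb (inTileb Rad i j (fst e)) (inTileb Rad i j (snd e)))
                      (cyc_edges c)) = (y - x)%nat).
Proof.
  exists 1000. intros Rad HR V HV Hdisk Horig i j Hadm inS inT y x Hy Hcov.
  destruct Hcov as (parts & Hlen & Hnd & Hmem & Hforall).
  set (f := inTileb Rad i j) in *.
  set (Ts := filter f V) in *.
  assert (HTs : forall t, In t Ts <-> inT t) by (intros; unfold Ts, inT; apply filter_In).
  assert (HTsnd : NoDup Ts) by (apply NoDup_filter; auto).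
  assert (Hdisj : forall v, inS v -> f v = false).
  { intros v (_ & i' & j' & _ & Hne & [Hle _] & Hv).
    destruct (f v) eqn:E; auto. exfalso. eapply tile_disj; eauto. }
  assert (Hgeo : forall v, inS v \/ inT v ->
     0 <= fst v /\ fst v < Rad /\ Rad - 2 * (INR i + 1) * ln 2 <= fst v /\ inSector Rad i j v).
  { intros v [(_ & i' & j' & _ & _ & [Hle Hb] & Hv) | (_ & Hv)].
    - destruct (tile_spec _ _ _ _ Hv) as (A0 & A1 & A2 & _).
      apply le_INR in Hle. pose proof ln2_bounds.
      split; [exact A0|split; [exact A1|split; [nra|apply Hb; exact Hv]]].
    - destruct (tile_spec _ _ _ _ Hv) as (A0 & A1 & A2 & _ & A4).
      split; [|split; [|split]]; auto. }
  set (E := fun a b : pt => a <> b -> adjG Rad a b).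
  set (Wp := fun v => inS v \/ inT v).
  assert (HE1 : forall a b, inT a -> Wp b -> E a b).
  { intros a b Ha Hb Hab. split; auto.
    destruct (Hgeo b Hb) as (B0 & B1 & B2 & B3).
    refine (proj1 (geo_pts Rad i j a b _ _ _ _ _ _ _)); auto; try apply Ha; lra. }
  assert (HE2 : forall a b, inT a -> Wp b -> E b a).
  { intros a b Ha Hb Hab. split; auto.
    destruct (Hgeo b Hb) as (B0 & B1 & B2 & B3).
    refine (proj2 (geo_pts Rad i j a b _ _ _ _ _ _ _)); auto; try apply Ha; lra. }
  set (k := (x - y)%nat).
  set (Q1 := firstn k parts). set (Q2 := skipn k parts).
  assert (Hsplit : parts = Q1 ++ Q2) by (symmetry; apply firstn_skipn).
  assert (HF12 : Forall (fun c => length c = 1%nat \/ is_cycle (adjG Rad) c) Q1 /\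
                 Forall (fun c => length c = 1%nat \/ is_cycle (adjG Rad) c) Q2).
  { apply Forall_app. rewrite <- Hsplit. auto. }
  destruct HF12 as [HF1 HF2].
  assert (HNall : NoDup (concat parts ++ Ts)).
  { apply NoDup_app; auto. intros a Ha Hb.
    apply Hmem in Ha. apply Hdisj in Ha. apply filter_In in Hb. destruct Hb as [_ Hb]. rewrite Ha in Hb; discriminate. }
  set (C := build Q2 Ts).
  assert (HCperm : Permutation (concat (Q1 ++ [C])) (concat parts ++ Ts)).
  { rewrite Hsplit, !concat_app. simpl. rewrite app_nil_r, <- app_assoc.
    apply Permutation_app_head. apply build_perm. }
  assert (HCnd : NoDup C).
  { pose proof (Permutation_NoDup (Permutation_sym HCperm) HNall) as H.
    rewrite concat_app in H. simpl in H. rewrite app_nil_r in H.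
    eapply NoDup_app_remove_l; eauto. }
  assert (HlenTs : length Ts = y) by reflexivity.
  assert (HQ2len : (length Q2 <= length Ts)%nat).
  { unfold Q2. rewrite length_skipn. lia. }
  assert (HClen : (3 <= length C)%nat).
  { unfold C. rewrite (Permutation_length (build_perm Q2 Ts)), length_app. lia. }
  destruct Ts as [|t1 Ts'] eqn:HTseq; [simpl in HlenTs; lia|].
  destruct (build_head Q2 t1 Ts') as [rest Hrest].
  assert (HQ2parts : forall P, In P Q2 -> exists a l, P = a :: l /\ chainp E a l /\
                                  forall v, In v P -> Wp v).
  { intros P HP. rewrite Forall_forall in HF2. destruct (HF2 P HP) as [H1|(H1 & _ & H3)].
    - destruct P as [|a [|b l]]; simpl in H1; try lia. exists a, []. split; auto.
      split; [exact I|]. intros v Hv. left. apply Hmem, in_concat. exists [a].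
      split; [rewrite Hsplit; apply in_or_app; right; exact HP| exact Hv].
    - destruct P as [|a l]; simpl in H1; try lia. exists a, l. split; auto. split.
      + eapply chainp_mono; [|eapply chain_of_cyc; exact H3].
        intros u w Huw _; exact Huw.
      + intros v Hv. left. apply Hmem, in_concat. exists (a :: l).
        split; auto. rewrite Hsplit; apply in_or_app; right; exact HP. }
  assert (HinT : forall t, In t (t1 :: Ts') -> inT t) by (intros; apply HTs; auto).
  assert (HCcyc : is_cycle (adjG Rad) C).
  { split; [auto|]. split; [auto|].
    fold C in Hrest. rewrite Hrest. unfold cyc_edges.
    assert (Hch : chainp E t1 (C ++ [t1])).
    { apply (build_chain E Wp inT HE1 HE2); auto.
      - intros; right; auto.
      - apply HinT; simpl; auto.
      - right. apply HinT; simpl; auto. }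
    rewrite Hrest in Hch. simpl in Hch. destruct Hch as [_ Hch].
    apply cyc_of_chain in Hch.
    rewrite Hrest in HCnd, HClen.
    destruct rest as [|r1 rest']; [simpl in HClen; lia|].
    assert (Hdist : Forall (fun e => fst e <> snd e) (combine (t1 :: r1 :: rest') ((r1 :: rest') ++ [t1]))).
    { inversion HCnd as [|a0 l0 Hni Hnd' Heq].
      simpl. constructor.
      - simpl. intro Heq'; apply Hni; rewrite Heq'; simpl; auto.
      - apply cyc_distinct; auto.
        intro; apply Hni; simpl; auto.
        intro Heq'; apply Hni; rewrite Heq'; simpl; auto. }
    rewrite Forall_forall in *. intros e He. apply Hch; [exact He|]. apply Hdist; exact He. }
  split.
  - exists (Q1 ++ [C]). split; [|split; [|split]].
    + rewrite length_app. unfold Q1. rewrite length_firstn, Hlen. change (length [C]) with 1%nat. unfold k. lia.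
    + apply (Permutation_NoDup (Permutation_sym HCperm) HNall).
    + intros v. split; intro Hv.
      * apply (Permutation_in _ HCperm) in Hv. apply in_app_or in Hv.
        destruct Hv as [Hv|Hv]; [left; apply Hmem; auto|right; apply HTs; auto].
      * apply (Permutation_in _ (Permutation_sym HCperm)). apply in_or_app.
        destruct Hv as [Hv|Hv]; [left; apply Hmem; auto|right; apply HTs; auto].
    + apply Forall_app. split; auto.
  - intros Hyx.
    assert (Hk : k = 0%nat) by (unfold k; lia).
    assert (HQ1 : Q1 = []) by (unfold Q1; rewrite Hk; reflexivity).
    exists C. split; [auto|]. split.
    + intros v. split; intro Hv.
      * assert (In v (concat (Q1 ++ [C]))) by (rewrite HQ1; simpl; rewrite app_nil_r; auto).
        apply (Permutation_in _ HCperm) in H. apply in_app_or in H.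
        destruct H as [H|H]; [left; apply Hmem; auto|right; apply HTs; auto].
      * assert (In v (concat (Q1 ++ [C]))).
        { apply (Permutation_in _ (Permutation_sym HCperm)). apply in_or_app.
          destruct Hv as [Hv|Hv]; [left; apply Hmem; auto|right; apply HTs; auto]. }
        rewrite HQ1 in H. simpl in H. rewrite app_nil_r in H. auto.
    + fold C in Hrest. rewrite Hrest. unfold cyc_edges.
      rewrite (cnt_combine f t1 rest t1).
      assert (Hc : cntp f t1 (C ++ [t1]) = ((if f t1 then 1 else 0) + (length (t1 :: Ts') - length Q2))%nat).
      { apply build_cnt; auto.
        - intros t Ht. apply HTs in Ht. apply Ht.
        - apply (HinT t1); simpl; auto.
        - intros P HP. destruct (HQ2parts P HP) as (a & l & HPe & _ & Hw).
          split; [rewrite HPe; congruence|]. intros v Hv.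
          apply Hdisj, Hmem, in_concat. exists P. split; auto.
          rewrite Hsplit; apply in_or_app; right; exact HP. }
      assert (Hf1 : f t1 = true) by (apply (HinT t1); simpl; auto).
      assert (HQ2l : length Q2 = x) by (unfold Q2; rewrite length_skipn, Hk, Hlen; lia).
      rewrite Hrest, HlenTs, HQ2l, Hf1 in Hc.
      change ((t1 :: rest) ++ [t1]) with (t1 :: (rest ++ [t1])) in Hc.
      cbn [cntp] in Hc. rewrite Hf1 in Hc. simpl andb in Hc. change (if true then 1%nat else 0%nat) with 1%nat in Hc. lia.
Qed.
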